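(* Let $n$ be a positive integer and let $k, c$ be complex numbers. Then \[ \sum_{\pi\in\mathcal{D}(n)} (-1)^{\#(\pi)-1} \sum_{j=1}^{s(\pi)} j^k c^j = \sum_{\substack{\pi\in\mathcal{P}(n)\\ \nu_d(\pi)\ge 2}} \sum_{j=0}^{\nu_d(\pi)-1} (-1)^j \binom{\nu_d(\pi)-1}{j} \bigl(\ell(\pi)-j\bigr)^k c^{\ell(\pi)-j} + \sigma_{k,c}(n), \] where $\sigma_{k,c}(n) = \sum_{d\mid n} d^k c^d$.
   Context: $\mathcal{P}(n)$ is the set of all partitions of $n$ and $\mathcal{D}(n)$ the set of partitions of $n$ into distinct parts. For a partition $\pi$: $s(\pi)$ is its smallest part, $\ell(\pi)$ its largest part, $\#(\pi)$ its number of parts, and $\nu_d(\pi)$ the number of distinct part sizes of $\pi$. For a positive integer $m$ and complex $k$, $m^k=e^{k\log m}$ with the real logarithm. *)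

(* Defs.v *)
From HB Require Import structures.
From mathcomp Require Import all_boot all_order all_algebra.
From mathcomp Require Import all_classical all_reals all_analysis.
From mathcomp Require Import complex.
Set Implicit Arguments. Unset Strict Implicit. Unset Printing Implicit Defensive.
Import Order.TTheory GRing.Theory Num.Theory.
Local Open Scope ring_scope.

(* m ^ k = exp (k log m) for a positive integer m and complex k, written out:
   exp((a + i b) t) = exp(a t) (cos (b t) + i sin (b t)) with t = ln m (real). *)
Definition cpow (R : realType) (m : nat) (k : R[i]) : R[i] :=
  let t := ln (m%:R : R) in
  @Complex R (expR (@complex.Re R k * t) * cos (@complex.Im R k * t)) (expR (@complex.Re R k * t) * sin (@complex.Im R k * t)).

(* A partition of n is encoded by its multiplicity function:
   mu i = number of parts equal to i (for 1 <= i <= n); mu 0 = 0.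
   Multiplicities are at most n, so mu : {ffun 'I_n.+1 -> 'I_n.+1}. *)
Definition mult_fun (n : nat) := {ffun 'I_n.+1 -> 'I_n.+1}.

Definition is_partition (n : nat) (mu : mult_fun n) : bool :=
  (nat_of_ord (mu ord0) == 0%N) && (\sum_(i < n.+1) (i * mu i)%N == n)%N.

Definition is_distinct_partition (n : nat) (mu : mult_fun n) : bool :=
  is_partition mu && [forall i, (nat_of_ord (mu i) <= 1)%N].

Definition nparts (n : nat) (mu : mult_fun n) : nat := (\sum_(i < n.+1) mu i)%N.
Definition ndistinct (n : nat) (mu : mult_fun n) : nat := #|[pred i | (0 < mu i)%N]|.
Definition spart (n : nat) (mu : mult_fun n) : nat :=
  \big[minn/n]_(i < n.+1 | (0 < mu i)%N) (nat_of_ord i).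
Definition lpart (n : nat) (mu : mult_fun n) : nat :=
  (\max_(i < n.+1 | (0 < mu i)%N) (nat_of_ord i))%N.

Definition sigma_kc (R : realType) (k c : R[i]) (n : nat) : R[i] :=
  \sum_(1 <= d < n.+1 | (d %| n)%N) cpow d k * c ^+ d.

(* Main.v *)
Require Import Defs.
From HB Require Import structures.
From mathcomp Require Import all_boot all_order all_algebra.
From mathcomp Require Import all_classical all_reals all_analysis.
From mathcomp Require Import complex.
From mathcomp Require Import ring.
From Stdlib Require Import Lia.
From mathcomp Require Import zify.
Set Implicit Arguments. Unset Strict Implicit. Unset Printing Implicit Defensive.
Import Order.TTheory GRing.Theory Num.Theory.
Local Open Scope ring_scope.
Section Cong.
Variable T : comNzRingType.
Definition cong (k a b : T) := exists c, a - b = k * c.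
Lemma cong_refl k a : cong k a a.
Proof. by exists 0; rewrite subrr mulr0. Qed.
Lemma cong_sym k a b : cong k a b -> cong k b a.
Proof. by case=> c h; exists (-c); rewrite mulrN -h opprB. Qed.
Lemma cong_trans k a b d : cong k a b -> cong k b d -> cong k a d.
Proof. by case=> c1 h1 [c2 h2]; exists (c1 + c2); rewrite mulrDr -h1 -h2 addrA subrK. Qed.
Lemma congD k a b c d : cong k a b -> cong k c d -> cong k (a + c) (b + d).
Proof.
case=> x h1 [y h2]; exists (x + y).
have -> : a + c - (b + d) = (a - b) + (c - d) by ring.
by rewrite h1 h2 mulrDr.
Qed.
Lemma congN k a b : cong k a b -> cong k (- a) (- b).
Proof. by case=> x h; exists (- x); rewrite -opprD h mulrN. Qed.
Lemma congB k a b c d : cong k a b -> cong k c d -> cong k (a - c) (b - d).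
Proof. by move=> h1 h2; apply: congD => //; apply: congN. Qed.
Lemma congM k a b c d : cong k a b -> cong k c d -> cong k (a * c) (b * d).
Proof.
case=> x h1 [y h2]; exists (x * c + b * y).
have -> : a * c - b * d = (a - b) * c + b * (c - d) by ring.
by rewrite h1 h2; ring.
Qed.
Lemma cong0 k a : cong k (k * a) 0.
Proof. by exists a; rewrite subr0. Qed.
Lemma cong_eq k a b : a = b -> cong k a b.
Proof. by move->; apply: cong_refl. Qed.
Lemma cong_sum k (I : Type) (r : seq I) (P : pred I) (F1 F2 : I -> T) :
  (forall i, P i -> cong k (F1 i) (F2 i)) ->
  cong k (\sum_(i <- r | P i) F1 i) (\sum_(i <- r | P i) F2 i).
Proof.
move=> h; apply: (big_ind2 (cong k)) => //; first exact: cong_refl.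
by move=> *; apply: congD.
Qed.
Lemma cong_prod k (I : Type) (r : seq I) (P : pred I) (F1 F2 : I -> T) :
  (forall i, P i -> cong k (F1 i) (F2 i)) ->
  cong k (\prod_(i <- r | P i) F1 i) (\prod_(i <- r | P i) F2 i).
Proof.
move=> h; apply: (big_ind2 (cong k)) => //; first exact: cong_refl.
by move=> *; apply: congM.
Qed.
Lemma congMl k a b c : cong k a b -> cong k (c * a) (c * b).
Proof. by move=> h; apply: congM => //; apply: cong_refl. Qed.
Lemma congMr k a b c : cong k a b -> cong k (a * c) (b * c).
Proof. by move=> h; apply: congM => //; apply: cong_refl. Qed.
End Cong.

Lemma cong_coef (R : comNzRingType) (k : R) (A B : {poly R}) j :
  cong k%:P A B -> cong k A`_j B`_j.
Proof. by case=> C h; exists C`_j; rewrite -coefB h coefCM. Qed.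

Section Alg.
Variable n : nat.
Local Notation q := ('X : {poly int}).
Local Notation K := ('X^(n.+1) : {poly int}).

Definition G (i : nat) : {poly int} := \sum_(1 <= t < n.+1) 'X^(i * t).
Definition II (r : nat) : {poly int} := \prod_(1 <= i < r.+1) (1 + G i).
Definition Qp (r : nat) : {poly int} := \prod_(1 <= i < r.+1) (1 - 'X^i).

Lemma oneG i : 1 + G i = \sum_(t < n.+1) ('X^i) ^+ t.
Proof.
rewrite big_ord_recl expr0 /G; congr (_ + _).
rewrite big_add1 /= big_mkord; apply: eq_bigr => t _.
by rewrite exprM.
Qed.

Lemma geomG i : (1 - 'X^i) * (1 + G i) = 1 - 'X^(i * n.+1).
Proof.
rewrite oneG exprM.
have := subrX1 ('X^i : {poly int}) n.+1 => h.
by rewrite -[RHS]opprB h -mulNr opprB.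
Qed.

Lemma KX i : (0 < i)%N -> exists c, 'X^(i * n.+1) = K * c.
Proof.
case: i => // i _; exists ('X^(i * n.+1)).
by rewrite -exprD mulSn.
Qed.

Lemma L1 i : (0 < i)%N -> cong K ((1 - 'X^i) * (1 + G i)) 1.
Proof.
move=> /KX [c hc]; rewrite geomG; exists (- c).
by rewrite hc; ring.
Qed.

Lemma L2 i : (0 < i)%N -> cong K ('X^i * (1 + G i)) (G i).
Proof.
move=> /KX [c hc]; exists c; rewrite -hc.
have := geomG i => h.
have -> : 'X^i * (1 + G i) - G i = 1 - (1 - 'X^i) * (1 + G i) by ring.
by rewrite h; ring.
Qed.

Lemma L3 r : cong K (Qp r * II r) 1.
Proof.
rewrite /Qp /II -big_split /=.
apply: (cong_trans (b := \prod_(1 <= i < r.+1) 1)); last by rewrite big1_eq; apply: cong_refl.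
rewrite big_nat_cond [X in cong _ _ X]big_nat_cond.
by apply: cong_prod => i /andP [/andP [hi _] _]; apply: L1.
Qed.

Lemma Qp0 : Qp 0 = 1. Proof. by rewrite /Qp big_geq. Qed.
Lemma QpS r : Qp r.+1 = Qp r * (1 - 'X^(r.+1)).
Proof. by rewrite /Qp big_nat_recr. Qed.
Lemma II0 : II 0 = 1. Proof. by rewrite /II big_geq. Qed.
Lemma IIS r : II r.+1 = II r * (1 + G r.+1).
Proof. by rewrite /II big_nat_recr. Qed.

Definition T (j : nat) : nat := 'C(j.+1, 2).
Lemma TS j : T j.+1 = (T j + j.+1)%N.
Proof. by rewrite /T binS bin1 addnC. Qed.
Lemma T_ge j : (j <= T j)%N.
Proof. elim: j => // j ih; rewrite TS; lia. Qed.

Fixpoint bb (r j : nat) : {poly int} :=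
  match r with
  | 0 => (j == 0)%:R
  | r'.+1 => bb r' j + (if j is j'.+1 then 'X^(r'.+1) * bb r' j' else 0)
  end.

Lemma bb0 r : bb r 0 = 1.
Proof. by elim: r => //= r ->; rewrite addr0. Qed.
Lemma bb_big r j : (r < j)%N -> bb r j = 0.
Proof.
elim: r j => [|r ih] [|j] //= h.
by rewrite !ih ?mulr0 ?addr0 //; lia.
Qed.

Lemma Q1 s j d : (j + d)%N = s -> Qp j * Qp d * bb s j = 'X^(T j) * Qp s.
Proof.
elim: s j d => [|s ih] j d.
  move=> h; have [-> ->] : j = 0%N /\ d = 0%N by lia.
  by rewrite Qp0 /T /= !mulr1 ?mul1r ?expr0.
case: j => [|j].
  by rewrite add0n => ->; rewrite bb0 Qp0 /T /= !mulr1 !mul1r.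
case: d => [|d] h.
  have hj : j = s by lia.
  subst j; rewrite /= bb_big // add0r.
  have := ih s 0%N (addn0 s); rewrite Qp0 mulr1 => h1.
  rewrite !QpS TS exprD.
  have -> : Qp s * (1 - 'X^(s.+1)) * 1 * ('X^(s.+1) * bb s s) = (Qp s * bb s s) * ((1 - 'X^(s.+1)) * 'X^(s.+1)) by ring.
  by rewrite h1; ring.
have h1 := ih j.+1 d ltac:(lia).
have h2 := ih j d.+1 ltac:(lia).
rewrite /= !QpS in h2 *.
have e1 : 'X^(T j.+1) = 'X^(T j) * 'X^(j.+1) :> {poly int} by rewrite TS exprD.
have e2 : 'X^(s.+1) = 'X^(d.+1) * 'X^(j.+1) :> {poly int} by rewrite -exprD; congr ('X^ _); lia.
rewrite QpS e1 e2 in h1 *.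
set A := bb s j.+1 in h1 *; set B := bb s j in h2 *.
set a := ('X^(d.+1) : {poly int}) in h2 *; set b := ('X^(j.+1) : {poly int}) in h1 *.
clearbody A B a b. have -> : Qp j * (1 - b) * (Qp d * (1 - a)) * (A + a * b * B) =
  (1 - a) * (Qp j * (1 - b) * Qp d * A) + a * b * (1 - b) * (Qp j * (Qp d * (1 - a)) * B) by ring.
rewrite h1 h2; ring.
Qed.


Lemma bb_alt r : \sum_(j < r.+1) (-1) ^+ j * bb r j = Qp r.
Proof.
elim: r => [|r ih].
  by rewrite big_ord_recl big_ord0 /= Qp0 addr0 mulr1.
have -> : \sum_(j < r.+2) (-1) ^+ j * bb r.+1 j =
   \sum_(j < r.+2) (-1) ^+ j * bb r j +
   \sum_(j < r.+2) (-1) ^+ j * (if (j : nat) is j'.+1 then 'X^(r.+1) * bb r j' else 0).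
  by rewrite -big_split; apply: eq_bigr => j _; rewrite /= mulrDr.
rewrite big_ord_recr /= ih bb_big // mulr0 addr0.
rewrite big_ord_recl /= mulr0 add0r.
have -> : \sum_(i < r.+1) (-1) ^+ (bump 0 i) * ('X^(r.+1) * bb r (0 + i)) =
   - 'X^(r.+1) * \sum_(i < r.+1) (-1) ^+ i * bb r i.
  rewrite big_distrr /=; apply: eq_bigr => i _.
  by rewrite /bump /= add1n add0n exprS; ring.
by rewrite ih QpS; ring.
Qed.

Lemma cong1l k (x y : {poly int}) : cong k x 1 -> cong k y (x * y).
Proof. by move=> h; apply: cong_sym; rewrite -{2}[y]mul1r; apply: congMr. Qed.
Lemma cong1r k (x y : {poly int}) : cong k x 1 -> cong k (y * x) y.
Proof. by move=> h; rewrite -{2}[y]mulr1; apply: congMl. Qed.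

Lemma Q2 r j : (j <= r)%N -> cong K (II r * bb r j) ('X^(T j) * II j * II (r - j)).
Proof.
move=> hjr.
have hQ := Q1 (subnKC hjr).
apply: (cong_trans (cong1l _ (L3 j))).
apply: (cong_trans (cong1l _ (L3 (r - j)))).
have -> : Qp (r - j) * II (r - j) * (Qp j * II j * (II r * bb r j)) =
   (Qp j * Qp (r - j) * bb r j) * (II j * II (r - j) * II r) by ring.
rewrite hQ.
have -> : 'X^(T j) * Qp r * (II j * II (r - j) * II r) =
   ('X^(T j) * II j * II (r - j)) * (Qp r * II r) by ring.
exact: cong1r (L3 r).
Qed.

Lemma Yprod a (I : Type) (s : seq I) (P : pred I) (F : I -> nat) :
  (forall i, P i -> (a <= F i)%N) ->
  exists c, \prod_(i <- s | P i) (1 - 'X^(F i)) = 1 + 'X^a * c :> {poly int}.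
Proof.
move=> h.
apply: (big_ind (fun p => exists c, p = 1 + 'X^a * c)).
- by exists 0; rewrite mulr0 addr0.
- move=> x y [c1 ->] [c2 ->]; exists (c1 + c2 + 'X^a * c1 * c2); ring.
- move=> i /h hi; exists (- 'X^(F i - a)).
  by rewrite mulrN -exprD subnKC.
Qed.

Lemma Yprod_nat a lo hi : (a <= lo)%N ->
  exists c, \prod_(lo <= i < hi) (1 - 'X^i) = 1 + 'X^a * c :> {poly int}.
Proof.
move=> ha; rewrite big_nat_cond.
apply: Yprod => i /andP [/andP [h1 _] _]; exact: leq_trans ha h1.
Qed.

Lemma bigK j e (c : {poly int}) : (n.+1 <= j + e)%N -> cong K ('X^j * 'X^e * c) 0.
Proof.
move=> h; exists ('X^(j + e - n.+1) * c).
by rewrite subr0 -exprD mulrA -exprD subnKC.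
Qed.

Lemma bb_cong j : (j <= n)%N -> cong K (bb n j) ('X^(T j) * II j).
Proof.
move=> hj.
have hQ := Q1 (subnKC hj).
apply: (cong_trans (cong1l _ (L3 j))).
apply: (cong_trans (cong1l _ (L3 (n - j)))).
have -> : Qp (n - j) * II (n - j) * (Qp j * II j * bb n j) =
   (Qp j * Qp (n - j) * bb n j) * (II j * II (n - j)) by ring.
rewrite hQ.
have eQ : Qp n = Qp (n - j) * \prod_((n - j).+1 <= i < n.+1) (1 - 'X^i).
  by rewrite /Qp -big_cat_nat //; lia.
have [c hc] := @Yprod_nat (n - j).+1 (n - j).+1 n.+1 (leqnn _).
rewrite eQ hc.
have -> : 'X^(T j) * (Qp (n - j) * (1 + 'X^((n - j).+1) * c)) * (II j * II (n - j)) =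
  ('X^(T j) * II j + 'X^(T j) * 'X^((n - j).+1) * (c * II j)) * (Qp (n - j) * II (n - j)) by ring.
apply: (cong_trans (cong1r _ (L3 (n - j)))).
rewrite -[X in cong _ _ X]addr0; apply: congD; first exact: cong_refl.
apply: bigK.
have := T_ge j; lia.
Qed.

Lemma Q3 : cong K (\sum_(j < n.+1) (-1) ^+ j * ('X^(T j) * II j)) (Qp n).
Proof.
rewrite -bb_alt; apply: cong_sum => j _.
apply: congMl; apply: cong_sym; apply: bb_cong.
by rewrite -ltnS.
Qed.


Lemma term_cong m r : (1 <= m <= r)%N ->
  cong K (II r * bb r (r - m) - II r.-1 * bb r.-1 (r - m))
         ('X^(T (r - m)) * II (r - m) * ('X^m * II m)).
Proof.
move=> /andP [hm hr].
have h1 := @Q2 r (r - m) (leq_subr _ _).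
have h2 := @Q2 r.-1 (r - m) ltac:(lia).
rewrite subKn // in h1.
rewrite (_ : (r.-1 - (r - m) = m.-1)%N) in h2; last by lia.
apply: (cong_trans (congB h1 h2)).
have eI : II m = II m.-1 * (1 + G m) by rewrite -[in LHS](prednK hm) IIS prednK.
rewrite eI.
have -> : 'X^(T (r - m)) * II (r - m) * (II m.-1 * (1 + G m)) -
   'X^(T (r - m)) * II (r - m) * II m.-1 = ('X^(T (r - m)) * II (r - m) * II m.-1) * G m by ring.
have -> : 'X^(T (r - m)) * II (r - m) * ('X^m * (II m.-1 * (1 + G m))) =
   ('X^(T (r - m)) * II (r - m) * II m.-1) * ('X^m * (1 + G m)) by ring.
apply: congMl; apply: cong_sym; apply: L2; lia.
Qed.

Lemma main_alg m : (1 <= m <= n)%N ->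
  cong K (\sum_(m <= r < n.+1) (-1) ^+ (r - m) *
            (II r * bb r (r - m) - II r.-1 * bb r.-1 (r - m)))
         ('X^m * \prod_(m.+1 <= i < n.+1) (1 - 'X^i)).
Proof.
move=> /andP [hm1 hmn].
set g := fun j => (-1) ^+ j * ('X^(T j) * II j) : {poly int}.
apply: (cong_trans (b := \sum_(m <= r < n.+1) g (r - m)%N * ('X^m * II m))).
  rewrite big_nat_cond [X in cong _ _ X]big_nat_cond.
  apply: cong_sum => r /andP [/andP [h1 h2] _].
  rewrite /g -mulrA; apply: congMl; apply: term_cong; lia.
rewrite -{1}[m]add0n big_addn.
under eq_bigr do rewrite addnK.
rewrite -big_distrl /=.
have eS : \sum_(0 <= j < n.+1) g j = \sum_(0 <= j < n.+1 - m) g j + \sum_(n.+1 - m <= j < n.+1) g j.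
  by rewrite -big_cat_nat //; lia.
have hQ3 : cong K (\sum_(0 <= j < n.+1) g j) (Qp n) by rewrite big_mkord; exact: Q3.
have htail : cong K ((\sum_(n.+1 - m <= j < n.+1) g j) * ('X^m * II m)) 0.
  rewrite big_distrl /=.
  apply: (cong_trans (b := \sum_(n.+1 - m <= j < n.+1) (0 : {poly int}))); last first.
    by rewrite big1_eq; apply: cong_refl.
  rewrite big_nat_cond [X in cong _ _ X]big_nat_cond.
  apply: cong_sum => j /andP [/andP [h1 h2] _].
  have -> : g j * ('X^m * II m) = 'X^(T j) * 'X^m * ((-1) ^+ j * II j * II m) by rewrite /g; ring.
  apply: bigK; have := T_ge j; lia.
have hA := congMr ('X^m * II m) hQ3.
rewrite eS mulrDl in hA.
have hB := congD (cong_refl K ((\sum_(0 <= j < n.+1 - m) g j) * ('X^m * II m))) htail.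
rewrite addr0 in hB.
apply: (cong_trans (cong_sym hB)); apply: (cong_trans hA).
have eQ : Qp n = Qp m * \prod_(m.+1 <= i < n.+1) (1 - 'X^i).
  by rewrite /Qp -big_cat_nat //; lia.
rewrite eQ.
have -> : Qp m * \prod_(m.+1 <= i < n.+1) (1 - 'X^i) * ('X^m * II m) =
  ('X^m * \prod_(m.+1 <= i < n.+1) (1 - 'X^i)) * (Qp m * II m) by ring.
exact: cong1r (L3 m).
Qed.


Definition Z (r : nat) : {poly {poly int}} := \prod_(1 <= i < r.+1) (1 + ('X + 1) * (G i)%:P).
Definition PP (r : nat) : {poly {poly int}} := \prod_(1 <= i < r.+1) (1 + 'X * ('X^i)%:P).

Lemma PP_coef r j : (PP r)`_j = bb r j.
Proof.
elim: r j => [|r ih] j.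
  by rewrite /PP big_geq // coef1.
rewrite /PP big_nat_recr //= -/(PP r) mulrDr mulr1 coefD ih mulrA coefMC coefMX.
by case: j => [|j] //=; rewrite ?mul0r ?addr0 // ih mulrC.
Qed.

Lemma Z_cong r : cong (K%:P) (Z r) ((II r)%:P * PP r).
Proof.
rewrite /Z /II /PP rmorph_prod /= -big_split /=.
rewrite big_nat_cond [X in cong _ _ X]big_nat_cond.
apply: cong_prod => i /andP [/andP [hi _] _].
have [c hc] := L2 hi.
exists (- ('X * c%:P)).
rewrite (_ : ('X^(n.+1))%:P * - ('X * c%:P) = - ('X * (('X^(n.+1) * c)%:P))); last first.
  by rewrite polyCM; ring.
rewrite -hc !(rmorphB, rmorphD, rmorphM, rmorph1) /=; ring.
Qed.

Lemma Zdiff_coef r j : (1 <= r)%N ->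
  cong K ((Z r - Z r.-1)`_j) (II r * bb r j - II r.-1 * bb r.-1 j).
Proof.
move=> hr; rewrite coefB.
apply: congB; rewrite -PP_coef -coefCM; apply: cong_coef; exact: Z_cong.
Qed.

Lemma cong_coefn (a b : {poly int}) : cong K a b -> a`_n = b`_n.
Proof.
case=> c h; apply/eqP; rewrite -subr_eq0 -coefB h coefXnM ltnSn //.
Qed.

Lemma alg_final m : (1 <= m <= n)%N ->
  (\sum_(m <= r < n.+1) (-1) ^+ (r - m) * (Z r - Z r.-1)`_(r - m))`_n =
  ('X^m * \prod_(m.+1 <= i < n.+1) (1 - 'X^i))`_n.
Proof.
move=> hm; apply: cong_coefn; apply: (cong_trans _ (main_alg hm)).
rewrite big_nat_cond [X in cong _ _ X]big_nat_cond.
apply: cong_sum => r /andP [/andP [h1 h2] _].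
apply: congMl; apply: Zdiff_coef.
case/andP: hm => hm _; exact: leq_trans hm h1.
Qed.

End Alg.

Lemma coefX1n (R : nzRingType) (N j : nat) : ((('X + 1) ^+ N : {poly R})`_j) = ('C(N, j))%:R.
Proof.
rewrite exprD1n coef_sum.
under eq_bigr do rewrite coefMn coefXn.
case: (ltnP j N.+1) => hj.
  rewrite (bigD1 (Ordinal hj)) //= eqxx big1 ?addr0 //.
  move=> i /negbTE hi; have -> : (j == i) = false by apply/eqP => e; move: hi; rewrite -(inj_eq val_inj) /= e eqxx.
  by rewrite mul0rn.
rewrite bin_small // big1 // => i _.
have : (i < j)%N by exact: leq_trans (ltn_ord i) hj.
by rewrite ltn_neqAle eq_sym => /andP [/negbTE -> _]; rewrite mul0rn.
Qed.

Lemma sum_ind0 (R : nzRingType) N : \sum_(t < N.+1) (((t : nat) == 0%N)%:R : R) = 1.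
Proof. by rewrite big_ord_recl /= big1 ?addr0. Qed.

Definition WE (r i t : nat) : {poly {poly int}} :=
  if i == 0%N then (t == 0%N)%:R
  else if (i <= r)%N then (if t == 0%N then ((i < r)%N)%:R else ('X + 1) * ('X^(i * t))%:P)
  else (t == 0%N)%:R.

Lemma sumWE n r i : \sum_(t < n.+1) WE r i t =
  if i == 0%N then 1 else if (i <= r)%N then ((i < r)%N)%:R + ('X + 1) * (G n i)%:P else 1.
Proof.
rewrite /WE; case: eqP => _; first exact: sum_ind0.
case: ifP => _; last exact: sum_ind0.
rewrite big_ord_recl /=; congr (_ + _).
rewrite /G rmorph_sum big_distrr /= big_add1 /= big_mkord.
by apply: eq_bigr.
Qed.

Lemma prodWE n r : (1 <= r <= n)%N ->
  \prod_(i < n.+1) \sum_(t < n.+1) WE r i t = Z n r - Z n r.-1.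
Proof.
move=> /andP [hr1 hrn].
under eq_bigr do rewrite sumWE.
rewrite -(big_mkord xpredT (fun i => if i == 0%N then 1 else if (i <= r)%N
   then ((i < r)%N)%:R + ('X + 1) * (G n i)%:P else 1)).
rewrite big_ltn // eqxx mul1r.
rewrite (big_cat_nat _ (n := r.+1)) //=.
rewrite [X in _ * X]big1_seq ?mulr1; last first.
  move=> i /andP [_]; rewrite mem_index_iota => /andP [h1 _].
  have e1 : (i == 0%N) = false by apply/negbTE; rewrite -lt0n; exact: leq_ltn_trans (leq0n r) h1.
  by rewrite e1 leqNgt h1.
rewrite big_nat_recr //= ltnn leqnn.
have -> : (r == 0%N) = false by apply/negbTE; rewrite -lt0n.
have eZ : Z n r = Z n r.-1 * (1 + ('X + 1) * (G n r)%:P).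
  by rewrite /Z -{1}(prednK hr1) big_nat_recr //= prednK.
rewrite [in RHS]eZ [in RHS]mulrDr mulr1 addrAC subrr add0r add0r; congr (_ * _).
rewrite /Z prednK //.
apply: eq_big_nat => i /andP [h1 h2].
have e1 : (i == 0%N) = false by apply/negbTE; rewrite -lt0n.
by rewrite e1 h2 (ltnW h2).
Qed.

Lemma prod_eq0 (R : comNzRingType) N (F : 'I_N -> R) : (exists i, F i = 0) -> \prod_i F i = 0.
Proof. by case=> i hi; rewrite (bigD1 i isT) /= hi mul0r. Qed.

Lemma ndistinct_sum n (mu : mult_fun n) : ndistinct mu = (\sum_(i < n.+1) (0 < mu i)%N)%N.
Proof.
rewrite /ndistinct -sum1_card big_mkcond /=; apply: eq_bigr => i _.
by rewrite inE; case: (0 < mu i)%N.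
Qed.

Definition validE n r (mu : mult_fun n) : bool :=
  [&& (mu ord0 == 0 :> nat), (0 < mu (inord r))%N & [forall i : 'I_n.+1, (r < i)%N ==> (mu i == 0 :> nat)]].

Lemma prodWE_mu n r (mu : mult_fun n) : (1 <= r <= n)%N ->
  \prod_(i < n.+1) WE r i (mu i) =
  if validE r mu then ('X^(\sum_(i < n.+1) i * mu i)%N)%:P * ('X + 1) ^+ (ndistinct mu) else 0.
Proof.
move=> /andP [hr1 hrn].
have hir : (inord r : 'I_n.+1) = r :> nat by rewrite inordK.
case: ifP => hv.
  move/and3P: hv => [h0 hr /forallP hgt].
  have hf : forall i : 'I_n.+1, WE r i (mu i) = ('X^(i * mu i))%:P * ('X + 1) ^+ (0 < mu i)%N.
    move=> i; rewrite /WE.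
    case: eqP => hi0.
      have -> : i = ord0 by apply: val_inj.
      by rewrite (eqP h0) muln0 /= mul1r.
    case: ifP => hir2.
      case: eqP => hm.
        rewrite hm muln0 /= !expr0 polyC1 mulr1.
        have -> : (i < r)%N; last by [].
        rewrite ltn_neqAle hir2 andbT; apply/eqP => e.
        move: hr; have -> : (inord r : 'I_n.+1) = i by apply: val_inj; rewrite /= hir e.
        by rewrite hm.
      have -> : (0 < mu i)%N by rewrite lt0n; apply/eqP.
      by rewrite expr1 mulrC.
    have := hgt i; rewrite ltnNge hir2 /= => /eqP hm.
    by rewrite hm muln0 /= mul1r.
  rewrite (eq_bigr _ (fun i _ => hf i)) big_split /= -rmorph_prod prodrXr.
  by rewrite prodrXr -ndistinct_sum.
apply: prod_eq0; move/negbT: hv; rewrite /validE !negb_and => /or3P [h|h|h].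
- by exists ord0; rewrite /WE /= (negbTE h).
- exists (inord r); rewrite /WE hir.
  have -> : (r == 0%N) = false by apply/negbTE; rewrite -lt0n.
  by rewrite leqnn ltnn; move: h; rewrite lt0n negbK => /eqP ->.
- case/forallPn: h => i; rewrite negb_imply => /andP [hi hm].
  exists i; rewrite /WE.
  have -> : (i == 0%N :> nat) = false by apply/negbTE; rewrite -lt0n; exact: leq_ltn_trans (leq0n r) hi.
  by rewrite leqNgt hi /= (negbTE hm).
Qed.

Lemma validE_iff n r (mu : mult_fun n) : (1 <= r <= n)%N ->
  (is_partition mu && (lpart mu == r)) =
  (validE r mu && ((\sum_(i < n.+1) i * mu i)%N == n)).
Proof.
move=> /andP [hr1 hrn].
have hir : (inord r : 'I_n.+1) = r :> nat by rewrite inordK.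
rewrite /is_partition /validE /lpart.
apply/idP/idP.
  case/andP => /andP [h0 hs] /eqP hl.
  have hgt : forall i : 'I_n.+1, (r < i)%N -> (mu i == 0 :> nat).
    move=> i hi; rewrite -leqn0 leqNgt; apply/negP => hm.
    have := leq_bigmax_cond (P := fun i : 'I_n.+1 => (0 < mu i)%N) (F := fun i : 'I_n.+1 => (i : nat)) i hm.
    by rewrite hl leqNgt hi.
  rewrite h0 hs andbT /= andbC.
  apply/andP; split.
    by apply/forallP => i; apply/implyP; exact: hgt.
  apply/negPn/negP => hz.
  have : (\max_(i < n.+1 | (0 < mu i)%N) (i : nat) <= r.-1)%N.
    apply/bigmax_leqP => i hi.
    have h1 : (i <= r)%N by rewrite leqNgt; apply/negP => /hgt /eqP hz0; move: hi; rewrite hz0.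
    have h2 : (i : nat) != r.
      apply/eqP => e; move: hz; have -> : (inord r : 'I_n.+1) = i by apply: val_inj; rewrite /= hir e.
      by rewrite hi.
    lia.
  rewrite hl; lia.
case/andP => /and3P [h0 hr /forallP hgt] hs.
rewrite h0 hs /=; apply/eqP/anti_leq/andP; split.
  apply/bigmax_leqP => i hi; rewrite leqNgt; apply/negP => hri.
  by have := hgt i; rewrite hri /= => /eqP hz0; move: hi; rewrite hz0.
by have := leq_bigmax_cond (P := fun i : 'I_n.+1 => (0 < mu i)%N) (F := fun i : 'I_n.+1 => (i : nat)) _ hr; rewrite hir.
Qed.

Lemma E_gf n r j : (1 <= r <= n)%N ->
  (\sum_(mu : mult_fun n | is_partition mu && (lpart mu == r)) ('C(ndistinct mu, j))%:R : int)
  = ((Z n r - Z n r.-1)`_j)`_n.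
Proof.
move=> hr.
rewrite -prodWE // (bigA_distr_bigA (fun (i t : 'I_n.+1) => WE r i t)) /=.
rewrite !coef_sum big_mkcond /=; apply: eq_bigr => mu _.
rewrite prodWE_mu // validE_iff //.
case: (validE r mu) => /=; last by rewrite coef0 coef0.
rewrite coefCM coefX1n mulr_natr coefMn coefXn eq_sym.
by case: (_ == _); rewrite ?mul0rn.
Qed.

Definition WD (m i t : nat) : {poly int} :=
  if (i < m)%N then (t == 0%N)%:R
  else if i == m then (if t == 1%N then - 'X^m else 0)
  else (if t == 0%N then 1 else if t == 1%N then - 'X^i else 0).

Lemma sum_ind1 (R : nzRingType) N (a : R) : (0 < N)%N ->
  \sum_(t < N.+1) (if (t : nat) == 1%N then a else 0) = a.
Proof.
case: N => // N _; rewrite big_ord_recl /= big_ord_recl /= big1 ?addr0 ?add0r //.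
Qed.

Lemma sumWD n m i : (0 < n)%N -> \sum_(t < n.+1) WD m i t =
  if (i < m)%N then 1 else if i == m then - 'X^m else 1 - 'X^i.
Proof.
move=> hn; rewrite /WD; case: ifP => _; first exact: sum_ind0.
case: ifP => _; first exact: sum_ind1.
case: n hn => // n' _; rewrite big_ord_recl /= big_ord_recl /= big1 ?addr0 //.
Qed.

Lemma prodWD n m : (1 <= m <= n)%N ->
  \prod_(i < n.+1) \sum_(t < n.+1) WD m i t = - ('X^m * \prod_(m.+1 <= i < n.+1) (1 - 'X^i)).
Proof.
move=> /andP [hm1 hmn].
have hn : (0 < n)%N by exact: leq_trans hm1 hmn.
rewrite (eq_bigr (fun i : 'I_n.+1 => if (i < m)%N then 1 else if (i : nat) == m then - 'X^m else 1 - 'X^i)); last by move=> i _; rewrite sumWD.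
rewrite -(big_mkord xpredT (fun i => if (i < m)%N then 1 else if i == m then - 'X^m else 1 - 'X^i)).
rewrite (big_cat_nat _ (n := m)) //=; last by apply: leq_trans hmn _.
rewrite big1_seq ?mul1r; last first.
  by move=> i /andP [_]; rewrite mem_index_iota => /andP [_ ->].
rewrite big_ltn; last by rewrite ltnS.
rewrite ltnn eqxx mulNr; congr (- (_ * _)).
apply: eq_big_nat => i /andP [h1 h2].
by rewrite ltnNge (ltnW h1) /= (gtn_eqF h1).
Qed.

Definition validD n m (mu : mult_fun n) : bool :=
  (mu (inord m) == 1%N :> nat) &&
  [forall i : 'I_n.+1, ((i < m)%N ==> (mu i == 0%N :> nat)) && (mu i <= 1)%N].

Lemma prodWD_mu n m (mu : mult_fun n) : (1 <= m <= n)%N ->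
  \prod_(i < n.+1) WD m i (mu i) =
  if validD m mu then (-1) ^+ (nparts mu) * 'X^(\sum_(i < n.+1) i * mu i)%N else 0.
Proof.
move=> /andP [hm1 hmn].
have him : (inord m : 'I_n.+1) = m :> nat by rewrite inordK.
case: ifP => hv.
  move/andP: hv => [hm /forallP hall].
  have hf : forall i : 'I_n.+1, WD m i (mu i) = (-1) ^+ (mu i) * 'X^(i * mu i).
    move=> i; have /andP [/implyP hlt hle] := hall i; rewrite /WD.
    case: ifP => hi.
      by rewrite (eqP (hlt hi)) muln0 /= expr0 mul1r.
    case: eqP => hie.
      have -> : i = inord m by apply: val_inj; rewrite /= him hie.
      by rewrite (eqP hm) him muln1 expr1 mulN1r.
    move: hle; case: (mu i : nat) => [|[|k]] //= _.
      by rewrite muln0 expr0 mulr1.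
    by rewrite muln1 expr1 mulN1r.
  rewrite (eq_bigr _ (fun i _ => hf i)) big_split /= !prodrXr.
  by rewrite /nparts.
apply: prod_eq0; move/negbT: hv; rewrite /validD negb_and => /orP [h|h].
  exists (inord m); rewrite /WD him ltnn eqxx.
  by rewrite (negbTE h).
case/forallPn: h => i; rewrite negb_and => /orP [h|h].
  rewrite negb_imply in h; case/andP: h => hi hm.
  by exists i; rewrite /WD hi (negbTE hm).
exists i; rewrite /WD.
case: ifP => hi.
  by move: h; case: (mu i : nat).
case: eqP => hie.
  by move: h; case: (mu i : nat) => [|[|k]].
by move: h; case: (mu i : nat) => [|[|k]].
Qed.

Lemma spart_le n (mu : mult_fun n) (i : 'I_n.+1) : (0 < mu i)%N -> (spart mu <= i)%N.
Proof.
move=> h; rewrite /spart.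
have : i \in index_enum 'I_n.+1 by rewrite mem_index_enum.
elim: (index_enum 'I_n.+1) => // a s ih; rewrite inE big_cons.
case/orP => [/eqP <-|hs].
  by rewrite h geq_minl.
case: ifP => _; last exact: ih.
exact: leq_trans (geq_minr _ _) (ih hs).
Qed.

Lemma spart_ge n (mu : mult_fun n) a : (a <= n)%N ->
  (forall i : 'I_n.+1, (0 < mu i)%N -> (a <= i)%N) -> (a <= spart mu)%N.
Proof.
move=> han h; rewrite /spart.
apply: (big_ind (fun x => a <= x)%N) => //.
  by move=> x y hx hy; rewrite leq_min hx hy.
Qed.

Lemma support_nonempty n (mu : mult_fun n) : (0 < n)%N ->
  (\sum_(i < n.+1) i * mu i)%N == n -> exists i : 'I_n.+1, (0 < mu i)%N.
Proof.
move=> hn hs.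
case: (pickP (fun i : 'I_n.+1 => (0 < mu i)%N)) => [i hi|h]; first by exists i.
move: hs; rewrite big1 => [/eqP e|i _]; first by move: hn; rewrite -{1}e.
by have := h i; rewrite lt0n => /negbFE /eqP ->; rewrite muln0.
Qed.

Lemma validD_iff n m (mu : mult_fun n) : (1 <= m <= n)%N ->
  (is_distinct_partition mu && (spart mu == m)) =
  (validD m mu && ((\sum_(i < n.+1) i * mu i)%N == n)).
Proof.
move=> /andP [hm1 hmn].
have hn : (0 < n)%N by exact: leq_trans hm1 hmn.
have him : (inord m : 'I_n.+1) = m :> nat by rewrite inordK.
rewrite /is_distinct_partition /is_partition /validD.
apply/idP/idP.
  case/andP => /andP [/andP [h0 hs] /forallP hd] /eqP hsp.
  have hlt : forall i : 'I_n.+1, (i < m)%N -> (mu i == 0%N :> nat).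
    move=> i hi; rewrite -leqn0 leqNgt; apply/negP => /spart_le.
    by rewrite hsp leqNgt hi.
  rewrite hs andbT; apply/andP; split; last first.
    by apply/forallP => i; rewrite hd andbT; apply/implyP; exact: hlt.
  rewrite eqn_leq hd /=; apply/negPn/negP => hz.
  have [j hj] := support_nonempty hn hs.
  have hge : forall i : 'I_n.+1, (0 < mu i)%N -> (m.+1 <= i)%N.
    move=> i hi; rewrite ltn_neqAle; apply/andP; split.
      apply/eqP => e; move: hz; have -> : (inord m : 'I_n.+1) = i by apply: val_inj; rewrite /= him e.
      by rewrite hi.
    by rewrite leqNgt; apply/negP => /hlt /eqP hz0; move: hi; rewrite hz0.
  have := @spart_ge n mu m.+1 (leq_trans (hge j hj) (leq_ord j)) hge.
  by rewrite hsp ltnn.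
case/andP => /andP [hm /forallP hall] hs.
have h0 : (mu ord0 == 0%N :> nat) by have /andP [/implyP h _] := hall ord0; exact: h.
rewrite h0 hs /=; apply/andP; split.
  by apply/forallP => i; have /andP [_ ->] := hall i.
rewrite eqn_leq; apply/andP; split.
  by have := @spart_le n mu (inord m); rewrite him (eqP hm); apply.
apply: spart_ge => // i hi; rewrite leqNgt; apply/negP => hlt.
by have /andP [/implyP /(_ hlt) /eqP hz _] := hall i; move: hi; rewrite hz.
Qed.

Lemma D_gf n m : (1 <= m <= n)%N ->
  (\sum_(mu : mult_fun n | is_distinct_partition mu && (spart mu == m)) (-1) ^+ (nparts mu).-1 : int)
  = ('X^m * \prod_(m.+1 <= i < n.+1) (1 - 'X^i))`_n.
Proof.
move=> hm.
rewrite -[RHS]opprK -coefN -prodWD // (bigA_distr_bigA (fun (i t : 'I_n.+1) => WD m i t)) /=.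
rewrite !coef_sum -sumrN big_mkcond /=; apply: eq_bigr => mu _.
rewrite prodWD_mu // validD_iff //.
case hv: (validD m mu) => /=; last by rewrite coef0 oppr0.
have hnp : (0 < nparts mu)%N.
  move/andP: hv => [hmu _]; rewrite /nparts (bigD1 (inord m)) //= (eqP hmu).
  by rewrite add1n.
have -> : ((-1) ^+ nparts mu : {poly int}) = ((-1) ^+ nparts mu)%:P.
  by rewrite rmorphXn rmorphN rmorph1.
rewrite coefCM coefXn.
case: ifP => h; rewrite eq_sym h.
  by rewrite mulr1 -{2}(prednK hnp) exprS mulN1r opprK.
by rewrite mulr0 oppr0.
Qed.

Lemma sum_by_val (R : nmodType) (I : finType) (P : pred I) (f : I -> nat) N (F : I -> nat -> R) :
  (forall i, P i -> (f i < N)%N) ->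
  \sum_(i | P i) F i (f i) = \sum_(r < N) \sum_(i | P i && (f i == r)) F i r.
Proof.
move=> hf.
rewrite [RHS](exchange_big_dep P) /=; last by move=> r i _ /andP [].
apply: eq_bigr => i hi.
rewrite (big_pred1 (Ordinal (hf i hi))) // => r /=.
by rewrite hi /= eq_sym -(inj_eq val_inj).
Qed.

Lemma inner_sum (N L m : nat) : (1 <= m)%N ->
  \sum_(j < N.+1) (-1) ^+ j * ('C(N, j))%:R * (((L - j)%N == m)%:R : int) =
  if (m <= L)%N then (-1) ^+ (L - m) * ('C(N, L - m))%:R else 0.
Proof.
move=> hm.
have e : forall j : 'I_N.+1, ((L - j)%N == m) = (((j : nat) == (L - m)%N) && (m <= L)%N).
  move=> j; apply/idP/idP.
    by move/eqP => h; apply/andP; split; [apply/eqP|]; lia.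
  by case/andP => /eqP -> h; apply/eqP; lia.
under eq_bigr do rewrite e.
case: ifP => hL.
  case: (ltnP (L - m) N.+1) => hl.
    rewrite (bigD1 (Ordinal hl)) //= eqxx andbT mulr1 big1 ?addr0 //.
    move=> j hj; have -> : ((j : nat) == (L - m)%N) = false.
      by apply/negbTE; apply: contra hj => /eqP h; apply/eqP; apply: val_inj.
    by rewrite /= mulr0.
  rewrite big1 ?bin_small ?mulr0 // => j _.
  have -> : ((j : nat) == (L - m)%N) = false by apply/negbTE; rewrite neq_ltn (leq_trans (ltn_ord j) hl).
  by rewrite /= mulr0.
by rewrite big1 // => j _; rewrite andbF mulr0.
Qed.

Definition Dc n m : int :=
  \sum_(mu : mult_fun n | is_distinct_partition mu && (spart mu == m)) (-1) ^+ (nparts mu).-1.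
Definition Ec n m : int :=
  \sum_(mu : mult_fun n | is_partition mu)
     \sum_(j < (ndistinct mu).+1) (-1) ^+ j * ('C(ndistinct mu, j))%:R * (((lpart mu - j)%N == m)%:R : int).

Lemma lpart_le n (mu : mult_fun n) : (lpart mu < n.+1)%N.
Proof. by rewrite ltnS; apply/bigmax_leqP => i _; rewrite -ltnS. Qed.

Lemma coef_sign (p : {poly int}) k i : ((-1) ^+ k * p)`_i = (-1) ^+ k * p`_i.
Proof.
have -> : ((-1) ^+ k : {poly int}) = ((-1) ^+ k)%:P by rewrite rmorphXn rmorphN rmorph1.
by rewrite coefCM.
Qed.

Lemma E_eq_D n m : (1 <= m <= n)%N -> Ec n m = Dc n m.
Proof.
move=> hm; have hm1 : (1 <= m)%N by case/andP: hm.
rewrite /Dc D_gf // -alg_final // coef_sum /Ec.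
under eq_bigr do rewrite inner_sum //.
rewrite (@sum_by_val int (mult_fun n) (@is_partition n) (@lpart n) n.+1 (fun mu r => if (m <= r)%N then (-1) ^+ (r - m) * ('C(ndistinct mu, r - m))%:R else 0 : int) (fun mu _ => lpart_le mu)).
rewrite -(big_mkord xpredT (fun r => \sum_(mu | is_partition mu && (lpart mu == r))
     (if (m <= r)%N then (-1) ^+ (r - m) * ('C(ndistinct mu, r - m))%:R else 0 : int))).
rewrite (big_cat_nat _ (n := m)) //=; last by case/andP: hm => _ h; exact: leq_trans h _.
rewrite big1_seq ?add0r; last first.
  move=> r /andP [_]; rewrite mem_index_iota => /andP [_ h].
  by rewrite leqNgt h big1.
apply: eq_big_nat => r /andP [h1 h2].
rewrite h1 coef_sign -E_gf; last by apply/andP; split; [exact: leq_trans hm1 h1 | rewrite -ltnS].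
by rewrite big_distrr.
Qed.

Lemma pascal (V : comNzRingType) (F : nat -> V) N L :
  \sum_(j < N.+2) (-1) ^+ j * ('C(N.+1, j))%:R * F (L - j)%N =
  \sum_(j < N.+1) (-1) ^+ j * ('C(N, j))%:R * (F (L - j)%N - F (L - j.+1)%N).
Proof.
rewrite big_ord_recl /=.
have -> : \sum_(i < N.+1) (-1) ^+ (bump 0 i) * ('C(N.+1, bump 0 i))%:R * F (L - bump 0 i)%N =
  \sum_(i < N.+1) (-1) ^+ i.+1 * ('C(N, i.+1))%:R * F (L - i.+1)%N +
  \sum_(i < N.+1) (-1) ^+ i.+1 * ('C(N, i))%:R * F (L - i.+1)%N.
  rewrite -big_split /=; apply: eq_bigr => i _.
  by rewrite /bump /= add1n binS natrD; ring.
have e2 : \sum_(i < N.+1) (-1) ^+ i.+1 * ('C(N, i))%:R * F (L - i.+1)%N =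
  - \sum_(i < N.+1) (-1) ^+ i * ('C(N, i))%:R * F (L - i.+1)%N.
  rewrite -sumrN; apply: eq_bigr => i _; rewrite exprS; ring.
rewrite e2 addrA.
have e1 : F (L - 0)%N + \sum_(i < N.+1) (-1) ^+ i.+1 * ('C(N, i.+1))%:R * F (L - i.+1)%N =
   \sum_(i < N.+1) (-1) ^+ i * ('C(N, i))%:R * F (L - i)%N.
  rewrite [RHS]big_ord_recl /= bin0 expr0 !mul1r.
  congr (_ + _).
  rewrite [LHS]big_ord_recr /= bin_small // mulr0 mul0r addr0.
  by apply: eq_bigr => i _; rewrite /bump /= add1n.
rewrite expr0 bin0 !mul1r e1 -sumrB; apply: eq_bigr => i _; ring.
Qed.

Lemma Fdiff (V : nmodType) (f : nat -> V) y : (1 <= y)%N ->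
  \sum_(1 <= i < y.+1) f i = \sum_(1 <= i < y.-1.+1) f i + f y.
Proof. by move=> hy; rewrite prednK // big_nat_recr. Qed.

Lemma nd_le_l n (mu : mult_fun n) : is_partition mu -> (ndistinct mu <= lpart mu)%N.
Proof.
case/andP => h0 _.
rewrite ndistinct_sum.
apply: (@leq_trans (\sum_(i < n.+1) ((0 < i) && (i <= lpart mu))%N)).
  apply: leq_sum => i _.
  case hm: (0 < mu i)%N => //=.
  have -> : (0 < i)%N.
    rewrite lt0n; apply/eqP => e.
    have ei : i = ord0 by apply: val_inj.
    by move: hm; rewrite ei (eqP h0).
  by rewrite /lpart (leq_bigmax_cond (P := fun i : 'I_n.+1 => (0 < mu i)%N) (F := fun i : 'I_n.+1 => (i : nat)) i hm).
rewrite -(big_mkord xpredT (fun i : nat => (((0 < i) && (i <= lpart mu))%N : nat))).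
have hl := lpart_le mu.
rewrite (big_cat_nat _ (n := (lpart mu).+1)) //=.
rewrite [X in (_ + X)%N]big1_seq ?addn0; last first.
  by move=> i /andP [_]; rewrite mem_index_iota => /andP [h1 _]; rewrite (leqNgt i) h1 andbF.
rewrite big_ltn // add0n.
rewrite (eq_big_nat _ _ (F2 := fun _ => 1%N)); last by move=> i /andP [h1 h2]; rewrite h1 -ltnS h2.
by rewrite sum_nat_const_nat subn1 muln1.
Qed.

Lemma nd_pos n (mu : mult_fun n) : (0 < n)%N -> is_partition mu -> (0 < ndistinct mu)%N.
Proof.
move=> hn /andP [_ hs].
have [i hi] := support_nonempty hn hs.
by apply/card_gt0P; exists i; rewrite inE.
Qed.

Lemma spart_le_n n (mu : mult_fun n) : (spart mu < n.+1)%N.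
Proof.
rewrite ltnS /spart; apply: (big_ind (fun x => x <= n)%N) => //.
  by move=> x y hx _; exact: leq_trans (geq_minl _ _) hx.
by move=> i _; rewrite -ltnS.
Qed.

Definition mud n d : mult_fun n := [ffun i : 'I_n.+1 => if (i : nat) == d then inord (n %/ d) else ord0].

Lemma mud_sum n d : (1 <= d <= n)%N -> (\sum_(i < n.+1) i * mud n d i)%N = (d * (n %/ d))%N.
Proof.
move=> /andP [h1 h2].
have hd : (inord d : 'I_n.+1) = d :> nat by rewrite inordK.
rewrite (bigD1 (inord d)) //= big1 ?addn0.
  by rewrite ffunE hd eqxx inordK // ltnS leq_div.
move=> i hi; rewrite ffunE.
have -> : ((i : nat) == d) = false.
  by apply/negbTE; apply: contra hi => /eqP e; apply/eqP; apply: val_inj; rewrite /= hd e.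
by rewrite muln0.
Qed.

Lemma char_sigma n (mu : mult_fun n) r : (1 <= r <= n)%N ->
  (is_partition mu && ~~ (2 <= ndistinct mu)%N && (lpart mu == r)) =
  (r %| n)%N && (mu == mud n r).
Proof.
move=> hr; case/andP: (hr) => hr1 hrn.
have hir : (inord r : 'I_n.+1) = r :> nat by rewrite inordK.
apply/idP/idP.
  case/andP => /andP [hp hnd] hl.
  have := validE_iff mu hr; rewrite hp hl /= => /esym /andP [/and3P [h0 hpos _] hs].
  have hz : forall i : 'I_n.+1, i != inord r -> (mu i == 0%N :> nat).
    move=> i hi; rewrite -leqn0 leqNgt; apply/negP => hmi.
    apply: (negP hnd); apply/card_gt1P.
    by exists i, (inord r); rewrite !inE hmi hpos hi.
  have hsum : (\sum_(i < n.+1) i * mu i)%N = (r * mu (inord r))%N.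
    rewrite (bigD1 (inord r)) //= big1 ?addn0 ?hir //.
    by move=> i /hz /eqP ->; rewrite muln0.
  have hdiv : (r %| n)%N by rewrite -(eqP hs) hsum dvdn_mulr.
  rewrite hdiv /=; apply/eqP/ffunP => i; rewrite ffunE.
  case: eqP => e.
    have -> : i = inord r by apply: val_inj; rewrite /= hir e.
    apply: val_inj; rewrite /= inordK ?ltnS ?leq_div //.
    by have := mulKn (mu (inord r) : nat) hr1; rewrite -hsum (eqP hs) => ->.
  apply/eqP; rewrite -(inj_eq val_inj) /=; apply: hz; apply/eqP => ei; apply: e; by rewrite ei hir.
case/andP => hdiv /eqP ->.
have hq : (0 < n %/ r)%N by rewrite divn_gt0 // hr1.
have hv : validE r (mud n r) && ((\sum_(i < n.+1) i * mud n r i)%N == n).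
  rewrite mud_sum // mulnC divnK // eqxx andbT /validE !ffunE /= hir eqxx inordK ?ltnS ?leq_div //.
  rewrite hq.
  have -> : (0 == r) = false by apply/negbTE; rewrite eq_sym -lt0n.
  rewrite /=; apply/forallP => i; apply/implyP => hi; rewrite ffunE.
  by have -> : ((i : nat) == r) = false by apply/negbTE; rewrite neq_ltn hi orbT.
rewrite -validE_iff // in hv; case/andP: hv => hp hl.
rewrite hp hl andbT /=.
apply/negP => h; have [x [y [hx hy hxy]]] := card_gt1P h.
move: hx hy hxy; rewrite !inE !ffunE.
case: eqP => ex; last by [].
case: eqP => ey; last by [].
move=> _ _; case/negP; apply/eqP; apply: val_inj; by rewrite /= ex ey.
Qed.

Lemma lpart_pos n (mu : mult_fun n) : (0 < n)%N -> is_partition mu -> (0 < lpart mu)%N.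
Proof.
move=> hn /andP [h0 hs].
have [i hi] := support_nonempty hn hs.
have hi0 : (0 < i)%N.
  rewrite lt0n; apply/eqP => e.
  have ei : i = ord0 by apply: val_inj.
  by move: hi; rewrite ei (eqP h0).
apply: leq_trans hi0 _.
by rewrite /lpart (leq_bigmax_cond (P := fun i : 'I_n.+1 => (0 < mu i)%N) (F := fun i : 'I_n.+1 => (i : nat)) i hi).
Qed.

Lemma sigma_part (V : nmodType) n (f : nat -> V) : (0 < n)%N ->
  \sum_(mu : mult_fun n | is_partition mu && ~~ (2 <= ndistinct mu)%N) f (lpart mu) =
  \sum_(1 <= d < n.+1 | (d %| n)%N) f d.
Proof.
move=> hn.
rewrite (@sum_by_val V (mult_fun n) (fun mu => is_partition mu && ~~ (2 <= ndistinct mu)%N)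
   (@lpart n) n.+1 (fun _ r => f r) (fun mu _ => lpart_le mu)).
rewrite [RHS]big_mkcond /=.
rewrite -(big_mkord xpredT (fun r => \sum_(mu | (is_partition mu && ~~ (2 <= ndistinct mu)%N) && (lpart mu == r)) f r)).
have e0 : \sum_(mu : mult_fun n | (is_partition mu && ~~ (2 <= ndistinct mu)%N) && (lpart mu == 0%N)) f 0%N = 0.
  rewrite big_pred0 // => mu; apply/negP; case/andP => /andP [hp _] /eqP hl.
  by have := lpart_pos hn hp; rewrite hl.
rewrite big_ltn // e0 add0r.
apply: eq_big_nat => r /andP [h1 h2].
rewrite (eq_bigl (fun mu => (r %| n)%N && (mu == mud n r))); last first.
  by move=> mu; rewrite char_sigma // h1 -ltnS.
case: (r %| n)%N => /=; last by rewrite big_pred0.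
by rewrite big_pred1_eq.
Qed.

Lemma F_delta (V : nzRingType) (F : nat -> V) n x : (x < n.+1)%N ->
  F x = \sum_(m < n.+1) F m * ((x == m)%:R : V).
Proof.
move=> hx; rewrite (bigD1 (Ordinal hx)) //= eqxx mulr1 big1 ?addr0 //.
move=> m hm; have -> : (x == m) = false.
  by apply/negbTE; apply: contra hm => /eqP e; apply/eqP; apply: val_inj; rewrite /= e.
by rewrite mulr0.
Qed.

Lemma claim (V : comNzRingType) (f : nat -> V) N L : (1 <= N <= L)%N ->
  \sum_(0 <= j < N) (-1) ^+ j * ('C(N.-1, j))%:R * f (L - j)%N =
  \sum_(j < N.+1) (-1) ^+ j * ('C(N, j))%:R * (\sum_(1 <= i < (L - j).+1) f i).
Proof.
case: N => [|N] /andP [h1 h2] //=.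
rewrite (pascal (fun x => \sum_(1 <= i < x.+1) f i) N L) big_mkord.
apply: eq_bigr => j _; congr (_ * _).
rewrite (@Fdiff V f (L - j)); last by have := ltn_ord j; lia.
rewrite subnS addrC addKr //.
Qed.


Unset Implicit Arguments.
Set Strict Implicit.

Theorem theorem2p6 (R : realType) (n : nat) (k c : R[i]) : (0 < n)%N ->
  \sum_(mu : mult_fun n | is_distinct_partition mu)
     (-1) ^+ (nparts mu).-1 * \sum_(1 <= j < (spart mu).+1) cpow j k * c ^+ j
  = \sum_(mu : mult_fun n | is_partition mu && (2 <= ndistinct mu)%N)
      \sum_(0 <= j < ndistinct mu)
        (-1) ^+ j * ('C((ndistinct mu).-1, j))%:R
          * cpow (lpart mu - j) k * c ^+ (lpart mu - j)
    + sigma_kc k c n.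
Proof.
move=> hn.
pose f := fun j : nat => cpow j k * c ^+ j.
pose F := fun x : nat => \sum_(1 <= j < x.+1) f j.
pose G := fun mu : mult_fun n =>
  \sum_(j < (ndistinct mu).+1) (-1) ^+ j * ('C(ndistinct mu, j))%:R * F (lpart mu - j)%N.
have eL : \sum_(mu : mult_fun n | is_distinct_partition mu)
     (-1) ^+ (nparts mu).-1 * \sum_(1 <= j < (spart mu).+1) cpow j k * c ^+ j =
   \sum_(m < n.+1) F m * (Dc n m)%:~R.
  rewrite (@sum_by_val _ (mult_fun n) (@is_distinct_partition n) (@spart n) n.+1
     (fun mu m => (-1) ^+ (nparts mu).-1 * F m) (fun mu _ => spart_le_n mu)).
  apply: eq_bigr => m _; rewrite /Dc rmorph_sum big_distrr /=.
  apply: eq_bigr => mu _; rewrite rmorphXn rmorphN1; ring.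
have eR1 : \sum_(mu : mult_fun n | is_partition mu && (2 <= ndistinct mu)%N)
      \sum_(0 <= j < ndistinct mu)
        (-1) ^+ j * ('C((ndistinct mu).-1, j))%:R
          * cpow (lpart mu - j) k * c ^+ (lpart mu - j) =
   \sum_(mu : mult_fun n | is_partition mu && (2 <= ndistinct mu)%N) G mu.
  apply: eq_bigr => mu /andP [hp _].
  rewrite /G -claim; last by rewrite nd_pos // nd_le_l.
  by apply: eq_bigr => j _; rewrite mulrA.
have eR2 : sigma_kc k c n =
   \sum_(mu : mult_fun n | is_partition mu && ~~ (2 <= ndistinct mu)%N) G mu.
  rewrite /sigma_kc -(sigma_part f hn).
  apply: eq_bigr => mu /andP [hp hnd].
  have hnd1 : ndistinct mu = 1%N.
    have := nd_pos hn hp; move: hnd; rewrite -ltnNge ltnS; lia.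
  rewrite /G -claim; last by rewrite hnd1 /= -hnd1 nd_le_l.
  by rewrite hnd1 big_nat1 subn0 expr0 mul1r bin0 mul1r.
rewrite eL eR1 eR2 -bigID /=.
have eM : \sum_(mu : mult_fun n | is_partition mu) G mu = \sum_(m < n.+1) F m * (Ec n m)%:~R.
  rewrite /Ec.
  under [RHS]eq_bigr do rewrite rmorph_sum big_distrr /=.
  rewrite [RHS](exchange_big_dep (@is_partition n)) //=.
  apply: eq_bigr => mu hp; rewrite /G.
  under [RHS]eq_bigr do rewrite rmorph_sum big_distrr /=.
  rewrite [RHS]exchange_big /=; apply: eq_bigr => j _.
  rewrite (F_delta F (leq_ltn_trans (leq_subr _ _) (lpart_le mu))) big_distrr /=.
  rewrite [RHS](eq_bigl (fun _ => true)); last by move=> i; rewrite hp.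
  apply: eq_bigr => m _.
  rewrite rmorphM rmorphM rmorphXn rmorphN1 !rmorph_nat; ring.
rewrite eM; apply: eq_bigr => m _.
case: m => [[|m] hm] /=.
  by rewrite /F big_geq // !mul0r.
by rewrite E_eq_D //; rewrite -ltnS.
Qed.
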